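(* Let $\mathbb{F}_q$ be a finite field with $\mathrm{char}(\mathbb{F}_q)>3$ and $3\mid q-1$, let $C$ be the subgroup of cubes in $\mathbb{F}_q^\times$ (of index $3$), and let $z\in\mathbb{F}_q^\times\setminus C$. Let $a,b\in\mathbb{F}_q^\times$. (1) If $a$ and $b$ lie in the same coset of $C$, then $J_3(a,b)$ is conjugate to $J_3(1,1)$. (2) If $a$ and $b$ lie in different cosets of $C$, then $J_3(a,b)$ is conjugate to $J_3(1,z)$ or to $J_3(1,z^2)$.
   Context: $\mathfrak{sl}_3(\mathbb{F}_q)$ is the Lie algebra of $3\times3$ traceless matrices over $\mathbb{F}_q$. Fix a primitive cube root of unity $u\in\mathbb{F}_q$. For nonzero $a,b\in\mathbb{F}_q$, $J_3(a,b)$ denotes the decomposition $\mathfrak{sl}_3(\mathbb{F}_q)=H_0\oplus H_1\oplus H_2\oplus H_3$, where $H_0$ is the subalgebra of traceless diagonal matrices and, for $j=1,2,3$ with $(\lambda_j,\mu_j)=(1,1),(u,u^2),(u^2,u)$ respectively, $H_j=\left\langle \begin{pmatrix}0&1&0\\0&0&\lambda_j a\\ \mu_j ab&0&0\end{pmatrix},\begin{pmatrix}0&0&1\\ \mu_j ab&0&0\\0&\lambda_j b&0\end{pmatrix}\right\rangle_{\mathbb{F}_q}$. (Such a decomposition is called a $J_3$-decomposition.) Two such decompositions are conjugate if there is a Lie algebra automorphism of $\mathfrak{sl}_3(\mathbb{F}_q)$ mapping each component of the first onto exactly one component of the second. *)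

(* Defs.v *)
From HB Require Import structures.
From mathcomp Require Import all_boot all_order all_algebra all_fingroup all_field.
Set Implicit Arguments. Unset Strict Implicit. Unset Printing Implicit Defensive.
Import Order.TTheory GRing.Theory.
Local Open Scope ring_scope.

Section J3.
Variable F : finFieldType.

Definition mx3 (a00 a01 a02 a10 a11 a12 a20 a21 a22 : F) : 'M[F]_3 :=
  \matrix_(i < 3, j < 3)
    nth 0 (nth [::] [:: [:: a00; a01; a02]; [:: a10; a11; a12]; [:: a20; a21; a22]] i) j.

Definition sl3 : {set 'M[F]_3} := [set A | \tr A == 0].

Definition lie (A B : 'M[F]_3) : 'M[F]_3 := A *m B - B *m A.

Definition span2 (A B : 'M[F]_3) : {set 'M[F]_3} :=
  [set x *: A + y *: B | x : F, y : F].

Definition H0 : {set 'M[F]_3} := [set A | is_diag_mx A && (\tr A == 0)].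

Definition lam_mu (u : F) (j : nat) : F * F :=
  match j with
  | 1 => (1, 1)
  | 2 => (u, u ^+ 2)
  | _ => (u ^+ 2, u)
  end.

Definition J3 (u a b : F) (j : 'I_4) : {set 'M[F]_3} :=
  if (j : nat) == 0%N then H0 else
  let l := (lam_mu u j).1 in let m := (lam_mu u j).2 in
  span2 (mx3 0 1 0   0 0 (l * a)   (m * a * b) 0 0)
        (mx3 0 0 1   (m * a * b) 0 0   0 (l * b) 0).

(* Lie algebra automorphism of sl_3(F) (phi considered on sl3 only) *)
Definition sl3_aut (phi : 'M[F]_3 -> 'M[F]_3) : Prop :=
  [/\ {in sl3, forall A, phi A \in sl3},
      {in sl3 &, forall A B, forall x : F, phi (x *: A + B) = x *: phi A + phi B},
      {in sl3 &, injective phi},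
      {in sl3, forall B, exists2 A, A \in sl3 & phi A = B} &
      {in sl3 &, forall A B, phi (lie A B) = lie (phi A) (phi B)}].

Definition conj_decomp (H H' : 'I_4 -> {set 'M[F]_3}) : Prop :=
  exists phi, sl3_aut phi /\
    exists sigma : 'I_4 -> 'I_4, forall i, phi @: H i = H' (sigma i).

Definition cubes : {set F} := [set x | [exists w, (w != 0) && (x == w ^+ 3)]].
Definition cube_coset (a : F) : {set F} := [set a * c | c in cubes].

End J3.

(* Main.v *)
Require Import Defs.
From HB Require Import structures.
From mathcomp Require Import all_boot all_order all_algebra all_fingroup all_field.
From mathcomp Require Import cyclic ring zify.
Import GRing.Theory.
Local Open Scope ring_scope.

Section Proof.
Variable F : finFieldType.

Lemma mem_span2 (A B X : 'M[F]_3) :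
  (X \in span2 A B) <-> exists x y, X = x *: A + y *: B.
Proof.
split; first by case/imset2P => x y _ _ ->; exists x, y.
by case=> x [y ->]; apply/imset2P; exists x y.
Qed.

Lemma conj_aut (P Q : 'M[F]_3) : P *m Q = 1%:M -> Q *m P = 1%:M ->
  sl3_aut (fun X => P *m X *m Q).
Proof.
move=> PQ QP; split.
- move=> A; rewrite !inE => /eqP tA.
  by rewrite mxtrace_mulC mulmxA QP mul1mx tA.
- move=> A B _ _ x; by rewrite mulmxDr mulmxDl -scalemxAr -scalemxAl.
- move=> A B _ _ /(congr1 (fun M => Q *m M *m P)).
  by rewrite /= !mulmxA QP mul1mx -!mulmxA QP !mulmx1 mul1mx.
- move=> B hB; exists (Q *m B *m P).
    by rewrite inE mxtrace_mulC mulmxA PQ mul1mx; rewrite inE in hB.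
  by rewrite !mulmxA PQ mul1mx -!mulmxA PQ mulmx1.
- have e X Y : (P *m X *m Q) *m (P *m Y *m Q) = P *m (X *m Y) *m Q.
    by rewrite !mulmxA -(mulmxA _ Q P) QP mulmx1.
  move=> A B _ _; by rewrite /lie !e mulmxBr mulmxBl.
Qed.

Definition dv (y w : F) : 'rV[F]_3 := \row_(i < 3) nth 0 [:: 1; y; w] i.
Definition dvi (y w : F) : 'rV[F]_3 := \row_(i < 3) (nth 0 [:: 1; y; w] i)^-1.
Definition cphi (y w : F) (X : 'M[F]_3) :=
  diag_mx (dv y w) *m X *m diag_mx (dvi y w).

Lemma dv_neq0 (y w : F) (i : 'I_3) : y != 0 -> w != 0 -> nth 0 [:: 1; y; w] i != 0.
Proof. by move=> hy hw; case: i => [[|[|[|i]]] hi] //=; rewrite oner_neq0. Qed.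

Lemma dvi_dv y w : y != 0 -> w != 0 -> diag_mx (dvi y w) *m diag_mx (dv y w) = 1%:M.
Proof.
move=> hy hw; apply/matrixP=> i j; rewrite mul_diag_mx !mxE.
case: (eqVneq i j) => [->|nij]; last by rewrite mulr0n mulr0.
by rewrite !mulr1n mulVf // dv_neq0.
Qed.

Lemma dv_dvi y w : y != 0 -> w != 0 -> diag_mx (dv y w) *m diag_mx (dvi y w) = 1%:M.
Proof.
move=> hy hw; apply/matrixP=> i j; rewrite mul_diag_mx !mxE.
case: (eqVneq i j) => [->|nij]; last by rewrite mulr0n mulr0.
by rewrite !mulr1n mulfV // dv_neq0.
Qed.

Lemma cphi_aut y w : y != 0 -> w != 0 -> sl3_aut (cphi y w).
Proof. by move=> hy hw; apply: conj_aut; [apply: dv_dvi | apply: dvi_dv]. Qed.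

Lemma cphi_diag y w X : y != 0 -> w != 0 -> is_diag_mx X -> cphi y w X = X.
Proof.
move=> hy hw /is_diag_mxP hX; apply/matrixP=> i j.
rewrite /cphi mul_diag_mx mul_mx_diag !mxE.
case: (eqVneq i j) => [<-|nij]; first by rewrite mulrC mulrA mulVf ?mul1r // dv_neq0.
by rewrite hX ?mulr0 ?mul0r.
Qed.

Lemma cphi_H0 y w : y != 0 -> w != 0 -> cphi y w @: H0 F = H0 F.
Proof.
move=> hy hw; apply/setP=> X; apply/imsetP/idP.
  by case=> Y hY ->; rewrite cphi_diag //; move: hY; rewrite inE => /andP[].
move=> hX; exists X => //; rewrite cphi_diag //; rewrite inE in hX; by case/andP: hX.
Qed.

Lemma imset_span2 y w (A B : 'M[F]_3) :
  cphi y w @: span2 A B = span2 (cphi y w A) (cphi y w B).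
Proof.
rewrite /cphi; apply/setP=> X; apply/idP/idP.
- case/imsetP => Y /mem_span2 [x [z ->]] ->; apply/mem_span2; exists x, z.
  by rewrite mulmxDr mulmxDl -!scalemxAr -!scalemxAl.
- move/mem_span2=> [x [z ->]]; apply/imsetP; exists (x *: A + z *: B).
    by apply/mem_span2; exists x, z.
  by rewrite mulmxDr mulmxDl -!scalemxAr -!scalemxAl.
Qed.

Lemma span2_scale (A B : 'M[F]_3) c d : c != 0 -> d != 0 ->
  span2 (c *: A) (d *: B) = span2 A B.
Proof.
move=> hc hd; apply/setP=> X; apply/idP/idP => /mem_span2 [x [y ->]]; apply/mem_span2.
- by exists (x * c), (y * d); rewrite !scalerA.
- by exists (x / c), (y / d); rewrite !scalerA !divfK.
Qed.

Lemma cphi_span (a b y l m : F) : a != 0 -> y != 0 ->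
  cphi y (a * y ^+ 2) @: span2 (mx3 0 1 0   0 0 (l * a)   (m * a * b) 0 0)
        (mx3 0 0 1   (m * a * b) 0 0   0 (l * b) 0)
  = span2 (mx3 0 1 0   0 0 (l * 1)   (m * 1 * (a ^+ 2 * b * y ^+ 3)) 0 0)
        (mx3 0 0 1   (m * 1 * (a ^+ 2 * b * y ^+ 3)) 0 0   0 (l * (a ^+ 2 * b * y ^+ 3)) 0).
Proof.
move=> ha hy; have hw : a * y ^+ 2 != 0 by rewrite mulf_neq0 ?expf_neq0.
rewrite imset_span2 -[RHS](@span2_scale _ _ y^-1 (a * y ^+ 2)^-1) ?invr_neq0 //.
congr span2; apply/matrixP=> i j;
  rewrite /cphi mul_diag_mx mul_mx_diag /mx3 !mxE;
  case: i => [[|[|[|i]]] hi] //; case: j => [[|[|[|j]]] hj] //=.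
all: rewrite ?(mul0r, mulr0, mul1r, mulr1, invr1) //.
all: field; by rewrite ?ha ?hy.
Qed.


Lemma conj_main u (a b y : F) : a != 0 -> y != 0 ->
  conj_decomp (J3 u a b) (J3 u 1 (a ^+ 2 * b * y ^+ 3)).
Proof.
move=> ha hy; have hw : a * y ^+ 2 != 0 by rewrite mulf_neq0 ?expf_neq0.
exists (cphi y (a * y ^+ 2)); split; first exact: cphi_aut.
exists id => j; rewrite /J3 /=; case: ifP => _; first exact: cphi_H0.
exact: cphi_span.
Qed.

Lemma cubes_exp (x w : F) : w != 0 -> x = w ^+ 3 -> x \in cubes F.
Proof. by move=> hw ->; rewrite inE; apply/existsP; exists w; rewrite hw eqxx. Qed.

Lemma cube_dich (t z : F) : t != 0 -> z != 0 -> t \notin cubes F -> z \notin cubes F ->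
  exists2 w, w != 0 & (t = z * w ^+ 3 \/ t = z ^+ 2 * w ^+ 3).
Proof.
move=> ht hz tnc znc.
have cF : (0 < #|F|)%N by apply/card_gt0P; exists 0.
have Xn (x : F) : x != 0 -> x ^+ #|F|.-1 = 1.
  move=> hx; apply: (mulfI hx); rewrite /= mulr1 -exprS prednK //.
  exact: expf_card.
pose rs := enum (predC1 (0 : F)).
have n_gt0 : (0 < #|F|.-1)%N.
  by rewrite -(cardC1 (0 : F)); apply/card_gt0P; exists 1; rewrite !inE oner_neq0.
have : has (#|F|.-1).-primitive_root rs.
  apply: has_prim_root => //.
  - apply/allP => x; rewrite mem_enum !inE => hx; rewrite unity_rootE Xn //.
  - exact: enum_uniq.
  - by rewrite -cardE cardC1.
case/hasP => g _ gp.
have g0 : g != 0.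
  apply/eqP => g0; move: (prim_expr_order gp); rewrite g0 expr0n.
  by case: (#|F|.-1) n_gt0 => // n _ /eqP; rewrite eq_sym oner_eq0.
have cube k : (3 %| k)%N -> g ^+ k \in cubes F.
  move=> hk; apply: (@cubes_exp _ (g ^+ (k %/ 3))); first by rewrite expf_neq0.
  by rewrite -exprM divnK.
case: (prim_rootP gp (Xn t ht)) => i ti.
case: (prim_rootP gp (Xn z hz)) => j zj.
have ni : ~~ (3 %| i)%N by apply: contra tnc => h; rewrite ti cube.
have nj : ~~ (3 %| j)%N by apply: contra znc => h; rewrite zj cube.
have : (3 %| i + j * 2)%N \/ (3 %| i + j)%N by move: ni nj; clear; lia.
case=> hk.
- exists (g ^+ ((i + j * 2) %/ 3) / z); first by rewrite mulf_neq0 ?invr_neq0 ?expf_neq0.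
  left; have e : t * z ^+ 2 = (g ^+ ((i + j * 2) %/ 3)) ^+ 3.
    by rewrite -exprM divnK // ti zj -exprM -exprD.
  rewrite expr_div_n -e; field; exact: hz.
- exists (g ^+ ((i + j) %/ 3) / z); first by rewrite mulf_neq0 ?invr_neq0 ?expf_neq0.
  right; have e : t * z = (g ^+ ((i + j) %/ 3)) ^+ 3.
    by rewrite -exprM divnK // ti zj -exprD.
  rewrite expr_div_n -e; field; exact: hz.
Qed.

Lemma coset_eq (a b s : F) : s != 0 -> b = a * s ^+ 3 -> cube_coset a = cube_coset b.
Proof.
move=> hs ->; apply/setP => x; apply/imsetP/imsetP => [[c hc ->]|[c hc ->]].
- exists (c / s ^+ 3); last by field; rewrite ?expf_neq0.
  rewrite inE in hc; case/existsP: hc => w /andP[hw /eqP ->].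
  apply: (@cubes_exp _ (w / s)); first by rewrite mulf_neq0 ?invr_neq0.
  by rewrite expr_div_n.
- exists (s ^+ 3 * c); last by rewrite mulrA.
  rewrite inE in hc; case/existsP: hc => w /andP[hw /eqP ->].
  apply: (@cubes_exp _ (s * w)); first by rewrite mulf_neq0.
  by rewrite exprMn.
Qed.

End Proof.
Arguments coset_eq {F}.
Arguments cube_dich {F}.

Theorem proposition3p10 (F : finFieldType) (u z a b : F) :
  (forall p, p \in [pchar F] -> (3 < p)%N) ->
  (3 %| #|F|.-1)%N ->
  3.-primitive_root u ->
  z != 0 -> z \notin cubes F ->
  a != 0 -> b != 0 ->
  (cube_coset a = cube_coset b ->
     conj_decomp (J3 u a b) (J3 u 1 1)) /\
  (cube_coset a != cube_coset b ->
     conj_decomp (J3 u a b) (J3 u 1 z) \/ conj_decomp (J3 u a b) (J3 u 1 (z ^+ 2))).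
Proof.
move=> _ _ _ hz znc ha hb; split.
- move=> E.
  have : a \in cube_coset b.
    rewrite -E; apply/imsetP; exists 1; last by rewrite mulr1.
    by apply: (@cubes_exp _ 1 1); rewrite ?oner_neq0 ?expr1n.
  case/imsetP => c; rewrite inE => /existsP [s /andP [hs /eqP ->]] ea.
  have hy : (b * s ^+ 2)^-1 != 0 by rewrite invr_neq0 // mulf_neq0 ?expf_neq0.
  have := conj_main _ u a b _ ha hy.
  have -> : a ^+ 2 * b * (b * s ^+ 2)^-1 ^+ 3 = 1.
    by rewrite ea; field; rewrite hb hs.
  by [].
- move=> NE.
  have ht : b / a != 0 by rewrite mulf_neq0 ?invr_neq0.
  have tnc : b / a \notin cubes F.
    apply: contra NE; rewrite inE => /existsP [s /andP [hs /eqP e]].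
    by apply/eqP; apply: (coset_eq a b s hs); rewrite -e mulrC divfK.
  case: (cube_dich _ _ ht hz tnc znc) => w hw [e|e].
  + left.
    have hy : (a * w)^-1 != 0 by rewrite invr_neq0 // mulf_neq0.
    have := conj_main _ u a b _ ha hy.
    have eb : b = z * w ^+ 3 * a by rewrite -e divfK.
    have -> : a ^+ 2 * b * (a * w)^-1 ^+ 3 = z.
      by rewrite eb; field; rewrite ha hw.
    by [].
  + right.
    have hy : (a * w)^-1 != 0 by rewrite invr_neq0 // mulf_neq0.
    have := conj_main _ u a b _ ha hy.
    have eb : b = z ^+ 2 * w ^+ 3 * a by rewrite -e divfK.
    have -> : a ^+ 2 * b * (a * w)^-1 ^+ 3 = z ^+ 2.
      by rewrite eb; field; rewrite ha hw.
    by [].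
Qed.
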